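(* In the $\{0,1\}$-speed setting, let $\mathcal B=\{B_1,\dots,B_m\}$ be a partition of $n$ jobs with processing times $\mathbf p$ into $m$ bags, and let $\mathcal B^*=\{B^*_1,\dots,B^*_m\}$ be an optimal partition of the jobs when all $m$ machines are available (i.e. a partition into $m$ bags with $\max_{B'\in\mathcal B^*}p(B')=opt(\mathbf p,m)$). If $\frac{\max_{B\in\mathcal B}p(B)}{\max_{B'\in\mathcal B^*}p(B')}\le\theta$, then $\mathcal B$ is a $\max\{\theta,2\}$-robust partition.
   Context: $\{0,1\}$-speed setting: there are $n$ jobs with processing times $p_1,\dots,p_n\ge0$ and $m$ machines, each of speed $0$ (unavailable) or $1$ (available); for a bag $B$, $p(B)=\sum_{j\in B}p_j$. $opt(\mathbf p,x)$ denotes the minimum makespan (maximum machine load) of scheduling the individual jobs on $x$ identical unit-speed machines. A partition of the jobs into $m$ bags is $\gamma$-robust if for every number $m_0\in\{1,\dots,m\}$ of available machines, the bags can be assigned (each as a whole) to $m_0$ identical unit-speed machines with makespan at most $\gamma\cdot opt(\mathbf p,m_0)$. *)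

(* Defs.v *)
From mathcomp Require Import all_boot all_order all_algebra.
Set Implicit Arguments. Unset Strict Implicit. Unset Printing Implicit Defensive.
Import Order.TTheory GRing.Theory Num.Theory.
Local Open Scope ring_scope.

(* Items of a finite type I with weights w are assigned by s : I -> 'I_k
   to k identical unit-speed machines; makespan = maximum machine load. *)
Definition makespan (R : realDomainType) (I : finType) (k : nat)
  (w : I -> R) (s : I -> 'I_k) : R :=
  \big[Num.max/0]_(i < k) \sum_(j | s j == i) w j.

(* opt(p, x): minimum makespan of scheduling the individual jobs on x
   machines (x >= 1; defined as 0 for x = 0, never used). *)
Definition opt (R : realDomainType) (n : nat) (p : 'I_n -> R) (x : nat) : R :=
  match x with
  | 0 => 0
  | x'.+1 => \big[Order.min/makespan p (fun _ : 'I_n => (ord0 : 'I_x'.+1))]_(s : {ffun 'I_n -> 'I_x'.+1})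
               makespan p s
  end.

(* A partition of the n jobs into m bags: B j is the bag of job j. *)
Definition bag_size (R : realDomainType) (n m : nat) (p : 'I_n -> R)
  (B : 'I_n -> 'I_m) (b : 'I_m) : R := \sum_(j | B j == b) p j.

Definition robust (R : realDomainType) (n m : nat) (p : 'I_n -> R)
  (B : 'I_n -> 'I_m) (gamma : R) : Prop :=
  forall m0 : nat, (1 <= m0 <= m)%N ->
    exists sigma : 'I_m -> 'I_m0,
      makespan (bag_size p B) sigma <= gamma * opt p m0.

(* Main.v *)
Require Import Defs.
From mathcomp Require Import all_boot all_order all_algebra.
From mathcomp Require Import lra.
Import Order.TTheory GRing.Theory Num.Theory.
Local Open Scope ring_scope.
Set Implicit Arguments. Unset Strict Implicit.
Section S.
Variable R : realFieldType.
Implicit Types (I : finType).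
Definition load I k (w : I -> R) (s : I -> 'I_k) (c : 'I_k) := \sum_(j | s j == c) w j.

Lemma load_le I k (w : I -> R) (s : I -> 'I_k) c : load w s c <= makespan w s.
Proof. rewrite /makespan; exact: (le_bigmax _ (fun c => load w s c)). Qed.

Lemma makespan_ge0 I k (w : I -> R) (s : I -> 'I_k) : 0 <= makespan w s.
Proof. exact: bigmax_ge_id. Qed.

Lemma makespan_le I k (w : I -> R) (s : I -> 'I_k) x : 0 <= x -> (forall c, load w s c <= x) ->
  makespan w s <= x.
Proof. by move=> h0 h; rewrite /makespan; apply: bigmax_le => // c _; apply: h. Qed.

Lemma sum_loads I k (w : I -> R) (s : I -> 'I_k) : \sum_j w j = \sum_(c < k) load w s c.
Proof. by rewrite (partition_big s xpredT) //. Qed.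

Lemma total_le I k (w : I -> R) (s : I -> 'I_k) : \sum_j w j <= k%:R * makespan w s.
Proof.
rewrite (sum_loads w s); apply: (@le_trans _ _ (\sum_(c < k) makespan w s)).
  by apply: ler_sum => c _; apply: load_le.
by rewrite sumr_const card_ord mulr_natl.
Qed.

Lemma load_split I k (w : I -> R) (s : I -> 'I_k) b d :
  load w s d = (if s b == d then w b else 0) + \sum_(j | j != b) (if s j == d then w j else 0).
Proof. by rewrite /load big_mkcond (bigD1 b) //=. Qed.

Lemma sum2 k (F : 'I_k -> R) i c : c != i ->
  \sum_d F d = F i + F c + \sum_(d | (d != i) && (d != c)) F d.
Proof.
move=> ci; rewrite (bigD1 i) //= (bigD1 c) //= addrA.
by congr (_ + _); apply: eq_bigl => d.
Qed.


Lemma local_opt I k (w : I -> R) :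
  exists sigma : I -> 'I_k.+1, forall b, 0 < w b -> forall c,
    load w sigma (sigma b) - w b <= load w sigma c.
Proof.
pose Phi (s : {ffun I -> 'I_k.+1}) := \sum_d (load w s d) ^+ 2.
pose s0 : {ffun I -> 'I_k.+1} := [ffun => ord0].
pose sig := Order.arg_min s0 xpredT Phi.
have [s _ smin] : extremum_spec <=%O xpredT Phi sig by apply: arg_minP.
exists s => b wb c.
have [->|ci] := eqVneq c (s b); first by rewrite lerBlDr lerDl ltW.
pose s' : {ffun I -> 'I_k.+1} := [ffun x => if x == b then c else s x].
have := smin s' isT.
rewrite /Phi (sum2 _ ci) [X in _ <= X](sum2 _ ci).
have rest : forall d, \sum_(j | j != b) (if s' j == d then w j else 0)
                   = \sum_(j | j != b) (if s j == d then w j else 0).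
  by move=> d; apply: eq_bigr => j jb; rewrite ffunE (negbTE jb).
have Es : forall d, load w s d = (if s b == d then w b else 0) + \sum_(j | j != b) (if s j == d then w j else 0).
  by move=> d; apply: load_split.
have Es' : forall d, load w s' d = (if s' b == d then w b else 0) + \sum_(j | j != b) (if s j == d then w j else 0).
  by move=> d; rewrite -rest; apply: load_split.
have -> : \sum_(d | (d != s b) && (d != c)) load w s' d ^+ 2 = \sum_(d | (d != s b) && (d != c)) load w s d ^+ 2.
  apply: eq_bigr => d /andP[d1 d2]; rewrite Es Es' ffunE eqxx.
  by rewrite [c == d]eq_sym (negbTE d2) [s b == d]eq_sym (negbTE d1).
rewrite (Es (s b)) (Es c) (Es' (s b)) (Es' c) ffunE eqxx eqxx (negbTE ci) eq_sym (negbTE ci).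
set Ri := \sum_(j | j != b) (if s j == s b then w j else 0).
set Rc := \sum_(j | j != b) (if s j == c then w j else 0).
set X := \sum_(d | _) _.
rewrite eqxx !add0r [w b + Ri]addrC addrK => h.
nra.
Qed.

Lemma opt_le n (p : 'I_n -> R) k (s : 'I_n -> 'I_k.+1) : opt p k.+1 <= makespan p s.
Proof.
rewrite /opt; apply: (bigmin_inf (finfun s)) => //.
rewrite le_eqVlt; apply/orP; left; apply/eqP.
by rewrite /makespan; apply: eq_bigr => c _; apply: eq_bigl => j; rewrite ffunE.
Qed.

Lemma opt_ge n (p : 'I_n -> R) k x :
  (forall s : 'I_n -> 'I_k.+1, x <= makespan p s) -> x <= opt p k.+1.
Proof. by move=> h; rewrite /opt; apply: le_bigmin => // s _; apply: h. Qed.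

Lemma opt_mono n (p : 'I_n -> R) k0 k : (k0 <= k)%N -> opt p k.+1 <= opt p k0.+1.
Proof.
move=> hk; apply: opt_ge => s.
have H : (k0.+1 <= k.+1)%N by [].
apply: le_trans (opt_le p (fun j => widen_ord H (s j))) _.
apply: makespan_le; first exact: makespan_ge0.
move=> c; case: (ltnP c k0.+1) => hc.
  apply: le_trans (load_le p s (Ordinal hc)); rewrite le_eqVlt; apply/orP; left; apply/eqP.
  by rewrite /load; apply: eq_bigl => j.
rewrite /load big_pred0; first exact: makespan_ge0.
move=> j; apply/negbTE; rewrite -val_eqE /=; apply/eqP => e.
by move: (ltn_ord (s j)); rewrite e ltnNge hc.
Qed.

Lemma opt_total n (p : 'I_n -> R) k : \sum_j p j <= k.+1%:R * opt p k.+1.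
Proof.
rewrite -ler_pdivrMl ?ltr0Sn //.
by apply: opt_ge => s; rewrite ler_pdivrMl ?ltr0Sn //; apply: total_le.
Qed.

Lemma sum_pos_ex I (P : pred I) (F : I -> R) :
  0 < \sum_(j | P j) F j -> exists j, P j && (0 < F j).
Proof.
move=> h; apply/existsP; case: (boolP [exists j, P j && (0 < F j)]) => // /existsPn H.
have : \sum_(j | P j) F j <= 0.
  by apply: sumr_le0 => j Pj; move: (H j); rewrite Pj /= -leNgt.
by rewrite leNgt h.
Qed.

Lemma load_ge I k (w : I -> R) (s : I -> 'I_k) j :
  (forall j, 0 <= w j) -> w j <= load w s (s j).
Proof.
move=> w0; rewrite /load (bigD1 j) //= lerDl; exact: sumr_ge0.
Qed.
End S.

Theorem lemma16 (R : realFieldType) (n m : nat) (p : 'I_n -> R)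
  (B Bstar : 'I_n -> 'I_m) (theta : R) :
  (forall j, 0 <= p j) ->
  makespan p Bstar = opt p m ->
  makespan p B / makespan p Bstar <= theta ->
  robust p B (Num.max theta 2).
Proof.
move=> p0 hstar hth m0 /andP[h1 h2].
case: m0 h1 h2 => [//|k] _ hkm.
case: m hkm B Bstar hstar hth => [//|m'] hkm B Bstar hstar hth.
set g := Num.max theta 2.
set w := bag_size p B.
have w0 : forall b, 0 <= w b by move=> b; apply: sumr_ge0 => j _.
set M := makespan p B.
have wM : forall b, w b <= M by move=> b; apply: load_le.
have M0 : 0 <= M by apply: makespan_ge0.
set o := opt p k.+1.
set T := \sum_j p j.
have T0 : 0 <= T by apply: sumr_ge0.
have hT : T <= k.+1%:R * o by apply: opt_total.
have o0 : 0 <= o.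
  have : 0 <= k.+1%:R * o by apply: le_trans hT.
  by rewrite pmulr_rge0 // ltr0Sn.
have g2 : 2 <= g by rewrite le_max lexx orbT.
have gth : theta <= g by rewrite le_max lexx.
have hM : M <= g * o.
  set ms := makespan p Bstar in hstar hth.
  have ms0 : 0 <= ms by apply: makespan_ge0.
  have [ms_eq0|ms_pos] := eqVneq ms 0.
    have pz : forall j, p j = 0.
      move=> j; apply/eqP; rewrite eq_le p0 andbT.
      rewrite -ms_eq0; apply: le_trans (load_ge Bstar j p0) _; exact: load_le.
    have : M <= 0.
      apply: makespan_le => // c; rewrite /load big1 // => j _; exact: pz.
    move=> M00; apply: le_trans M00 _; apply: mulr_ge0 => //; apply: le_trans g2; by [].
  have msp : 0 < ms by rewrite lt_def ms_pos ms0.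
  move: hth; rewrite ler_pdivrMr // => hth.
  have th0 : 0 <= theta.
    have : 0 <= theta * ms by apply: le_trans hth.
    by rewrite pmulr_lge0.
  have msle : ms <= o by rewrite hstar; apply: opt_mono.
  apply: le_trans hth _; apply: le_trans (ler_wpM2l th0 msle) _; exact: ler_wpM2r.
have [sigma hsig] := @local_opt R _ k w.
exists sigma.
have hTw : \sum_c load w sigma c = T.
  by rewrite -sum_loads /T (sum_loads p B).
apply: makespan_le; first by apply: mulr_ge0 => //; apply: le_trans g2.
move=> i.
have [LM|ML] := leP (load w sigma i) M; first exact: le_trans LM hM.
have L0 : 0 < load w sigma i by apply: le_lt_trans ML.
have [b1 /andP[/eqP hb1 pb1]] := sum_pos_ex L0.
have E1 : load w sigma i = w b1 + \sum_(b | (sigma b == i) && (b != b1)) w b.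
  by rewrite /load (bigD1 b1) //= hb1.
have R1 : 0 < \sum_(b | (sigma b == i) && (b != b1)) w b.
  by rewrite -(ltrD2l (w b1)) addr0 -E1; apply: le_lt_trans (wM b1) ML.
have [b2 /andP[/andP[/eqP hb2 nb] pb2]] := sum_pos_ex R1.
have E2 : \sum_(b | (sigma b == i) && (b != b1)) w b = w b2 +
   \sum_(b | ((sigma b == i) && (b != b1)) && (b != b2)) w b.
  by rewrite (bigD1 b2) //= hb2 eqxx nb.
have R2 : 0 <= \sum_(b | ((sigma b == i) && (b != b1)) && (b != b2)) w b.
  by apply: sumr_ge0.
have key : forall c, load w sigma i <= 2 * load w sigma c.
  move=> c; have := hsig b1 pb1 c; have := hsig b2 pb2 c.
  rewrite hb1 hb2 => u1 u2.
  move: E1 E2 R2 u1 u2; set L := load w sigma i; set Lc := load w sigma c.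
  set S1 := \sum_(b | _ && (b != b1)) w b. set S2 := \sum_(b | _ && (b != b2)) w b.
  move=> E1 E2 R2 u1 u2; lra.
have hsum : load w sigma i *+ k.+1 <= 2 * T.
  rewrite -hTw mulr_sumr -[X in _ *+ X]card_ord -sumr_const.
  by apply: ler_sum => c _; apply: key.
have : k.+1%:R * load w sigma i <= k.+1%:R * (2 * o).
  rewrite mulr_natl; apply: le_trans hsum _.
  by rewrite mulrCA; apply: ler_wpM2l.
rewrite ler_pM2l ?ltr0Sn // => h.
apply: le_trans h _; apply: ler_wpM2r => //.
Qed.
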